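(* Let $X$ be a topological space. The bounded continuous valuations $\nu$ on $X$ that take only finitely many values are exactly the finite linear combinations $\sum_{i=1}^n a_i\, e_{C_i}$, where each $C_i$ is an irreducible closed subset of $X$ and each $a_i\in(0,\infty)$.
   Context: A valuation on $X$ is a map $\nu:\mathcal OX\to[0,\infty]$ with $\nu(\emptyset)=0$, monotone and modular; continuous if it preserves directed suprema of opens; bounded if $\nu(X)<\infty$. A non-empty subset $A$ is irreducible if $A\subseteq B\cup C$ with $B,C$ closed implies $A\subseteq B$ or $A\subseteq C$. For an irreducible closed $C$, $e_C:\mathcal OX\to[0,\infty]$ maps $U$ to $1$ if $U\cap C\neq\emptyset$ and to $0$ otherwise. (The empty sum, $n=0$, is the zero valuation.) *)

(* Defs.v *)
From HB Require Import structures.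
From mathcomp Require Import all_boot all_order all_algebra.
From mathcomp Require Import all_classical all_reals topology ereal.
Set Implicit Arguments. Unset Strict Implicit. Unset Printing Implicit Defensive.
Import Order.TTheory GRing.Theory Num.Theory.
Local Open Scope classical_set_scope.
Local Open Scope ereal_scope.

Section Valuations.
Context {R : realType} {X : topologicalType}.

(* A valuation: a map from the open sets of X to [0, +oo] (only its values on
   open sets matter), vanishing on the empty set, monotone and modular. *)
Definition is_valuation (nu : set X -> \bar R) : Prop :=
  [/\ nu set0 = 0,
      (forall U, open U -> 0 <= nu U),
      (forall U V, open U -> open V -> U `<=` V -> nu U <= nu V) &
      (forall U V, open U -> open V -> nu U + nu V = nu (U `|` V) + nu (U `&` V))].

Definition directed_open_family (D : set (set X)) : Prop :=
  [/\ D !=set0, (forall U, D U -> open U) &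
      (forall U V, D U -> D V -> exists2 W, D W & (U `|` V) `<=` W)].

Definition continuous_valuation (nu : set X -> \bar R) : Prop :=
  forall D, directed_open_family D ->
    nu (\bigcup_(U in D) U) = ereal_sup (nu @` D).

Definition bounded_valuation (nu : set X -> \bar R) : Prop := nu setT < +oo.

Definition finitely_valued (nu : set X -> \bar R) : Prop :=
  finite_set (nu @` [set U | open U]).

Definition irreducible (A : set X) : Prop :=
  A !=set0 /\ forall B C, closed B -> closed C -> A `<=` B `|` C ->
    A `<=` B \/ A `<=` C.

Definition point_val (C : set X) (U : set X) : \bar R :=
  if pselect (U `&` C !=set0) then 1 else 0.

End Valuations.

(* Main.v *)
Require Import Defs.
From HB Require Import structures.
From mathcomp Require Import all_boot all_order all_algebra.
From mathcomp Require Import all_classical all_reals topology ereal.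
From mathcomp Require Import lra.
Import Order.TTheory GRing.Theory Num.Theory.
Local Open Scope classical_set_scope.
Local Open Scope ereal_scope.

Section Aux.
Context {R : realType} {X : topologicalType}.
Implicit Types (U V W : set X) (C : set X).

Lemma pvE C U : @point_val R X C U = if `[< U `&` C !=set0 >] then 1 else 0.
Proof. by rewrite /point_val; case: pselect => h; [rewrite asboolT | rewrite asboolF]. Qed.

Lemma mbU C U V : `[< (U `|` V) `&` C !=set0 >] = `[< U `&` C !=set0 >] || `[< V `&` C !=set0 >].
Proof.
apply/asboolP/orP.
- by move=> [x [[Ux|Vx] Cx]]; [left|right]; apply/asboolP; exists x.
- by move=> [/asboolP [x [Ux Cx]]|/asboolP [x [Vx Cx]]]; exists x; split=> //; [left|right].
Qed.

Lemma irr_meet C U V : irreducible C -> open U -> open V ->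
  U `&` C !=set0 -> V `&` C !=set0 -> (U `&` V) `&` C !=set0.
Proof.
move=> [_ hC] oU oV [x [Ux Cx]] [y [Vy Cy]].
apply: contrapT => h.
have sub : C `<=` ~` U `|` ~` V.
  move=> z Cz; apply: contrapT => /not_orP [/contrapT Uz /contrapT Vz].
  by apply: h; exists z.
by case: (hC _ _ (open_closedC oU) (open_closedC oV) sub) => [/(_ _ Cx)|/(_ _ Cy)].
Qed.

Lemma mbI C U V : irreducible C -> open U -> open V ->
  `[< (U `&` V) `&` C !=set0 >] = `[< U `&` C !=set0 >] && `[< V `&` C !=set0 >].
Proof.
move=> iC oU oV; apply/asboolP/andP.
- by move=> [x [[Ux Vx] Cx]]; split; apply/asboolP; exists x.
- by move=> [/asboolP h1 /asboolP h2]; exact: irr_meet.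
Qed.

Lemma pv_mono C U V (a : R) : (U `&` C !=set0 -> V `&` C !=set0) -> (0 <= a)%R ->
  a%:E * point_val C U <= a%:E * point_val C V.
Proof.
move=> h a0; rewrite /point_val; case: pselect => h1; case: pselect => h2 //.
by exfalso; apply: h2; apply: h.
by rewrite mule0 mule1 lee_fin.
Qed.

Lemma pv_modular C U V (a : R) : irreducible C -> open U -> open V ->
  a%:E * point_val C U + a%:E * point_val C V =
  a%:E * point_val C (U `|` V) + a%:E * point_val C (U `&` V).
Proof.
move=> iC oU oV; rewrite !pvE mbU mbI //.
by case: `[< U `&` C !=set0 >]; case: `[< V `&` C !=set0 >]; first [done | by rewrite /= addeC].
Qed.

Lemma choose_dir n (C : 'I_n -> set X) D : directed_open_family D ->
  exists2 U0, D U0 & forall i, (\bigcup_(U in D) U) `&` C i !=set0 -> U0 `&` C i !=set0.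
Proof.
move=> [[U1 DU1] oD dD].
suff : forall s : seq 'I_n, exists2 U0, D U0 & forall i, i \in s ->
   (\bigcup_(U in D) U) `&` C i !=set0 -> U0 `&` C i !=set0.
  by move=> /(_ (enum 'I_n)) [U0 DU0 h]; exists U0 => // i; apply: h; rewrite mem_enum.
elim=> [|j s [U0 DU0 IH]]; first by exists U1.
case: (pselect ((\bigcup_(U in D) U) `&` C j !=set0)) => hj.
- case: hj => x [[U2 DU2 U2x] Cx].
  case: (dD _ _ DU0 DU2) => W DW sW.
  exists W => // i; rewrite in_cons => /orP [/eqP ->|si] h.
    by exists x; split=> //; apply: sW; right.
  by case: (IH i si h) => y [U0y Cy]; exists y; split=> //; apply: sW; left.
- exists U0 => // i; rewrite in_cons => /orP [/eqP -> //|si]; exact: IH.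
Qed.

Lemma rev_dir (nu : set X -> \bar R) n (a : 'I_n -> R) (C : 'I_n -> set X) :
  (forall i, (0 < a i)%R) -> (forall i, closed (C i) /\ irreducible (C i)) ->
  (forall U, open U -> nu U = \sum_(i < n) (a i)%:E * point_val (C i) U) ->
  is_valuation nu /\ continuous_valuation nu /\ bounded_valuation nu /\ finitely_valued nu.
Proof.
move=> ha hC hnu.
have ha0 i : (0 <= a i)%R by apply: ltW.
have mono U V : U `<=` V -> \sum_(i < n) (a i)%:E * point_val (C i) U <=
    \sum_(i < n) (a i)%:E * point_val (C i) V.
  move=> UV; apply: lee_sum => i _; apply: pv_mono => // -[x [Ux Cx]].
  by exists x; split => //; exact: UV.
split; [split|split; [|split]].
- rewrite hnu; last exact: open0.
  rewrite big1 // => i _; rewrite pvE asboolF ?mule0 // => -[x [[]]].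
- move=> U oU; rewrite hnu //; apply: sume_ge0 => i _; rewrite pvE.
  by case: asboolP => _; rewrite ?mule1 ?mule0 ?lee_fin.
- by move=> U V oU oV UV; rewrite !hnu //; exact: mono.
- move=> U V oU oV; have oUV := openU oU oV; have oIV := openI oU oV.
  rewrite !hnu // -!big_split /=; apply: eq_bigr => i _; apply: pv_modular => //.
  exact: (hC i).2.
- move=> D hD; have [U0 DU0 h0] := choose_dir _ C _ hD; case: (hD) => _ oD _.
  have oB : open (\bigcup_(U in D) U) by apply: bigcup_open.
  apply: le_anti; apply/andP; split.
  + apply: le_ereal_sup_tmp; exists (nu U0); first by exists U0.
    rewrite (hnu _ oB) (hnu _ (oD _ DU0)); apply: lee_sum => i _.
    apply: pv_mono => //; exact: h0.
  + apply/ereal_supP => y [U DU <-]; rewrite (hnu _ oB) (hnu _ (oD _ DU)).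
    apply: mono => x Ux.
    by exists U.
- rewrite /bounded_valuation hnu; last exact: openT.
  have -> : \sum_(i < n) (a i)%:E * point_val (C i) [set: X] =
      (\sum_(i < n) (a i * (if `[< [set: X] `&` C i !=set0 >] then 1 else 0)))%:E.
    rewrite -sumEFin; apply: eq_bigr => i _; rewrite pvE.
    by case: ifP => _; rewrite ?mule1 ?mule0 ?mulr1 ?mulr0.
  exact: ltry.
- pose g (F : {ffun 'I_n -> bool}) := \sum_(i < n) (a i)%:E * (if F i then 1 else 0).
  apply: (@sub_finite_set _ _ [set` map g (enum {ffun 'I_n -> bool})]).
    move=> y [U oU <-]; apply/mapP; exists [ffun i => `[< U `&` C i !=set0 >]].
      by rewrite mem_enum.
    by rewrite hnu // /g; apply: eq_bigr => i _; rewrite ffunE pvE.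
  by apply/finite_seqP; eexists.
Qed.

Lemma fin_of (e : \bar R) (r : R) : 0 <= e -> e <= r%:E -> exists u : R, e = u%:E.
Proof. by case: e => [u _ _|_ //|//]; exists u. Qed.

Lemma max_seq (s : seq (\bar R)) (P : \bar R -> Prop) x : x \in s -> P x ->
  exists y, [/\ y \in s, P y & forall z, z \in s -> P z -> z <= y].
Proof.
elim: s x => [//|a s IH] x.
rewrite in_cons => xin Px.
case: (pselect (exists2 z, z \in s & P z)) => [[z zs Pz]|nz].
- have [y [ys Py ym]] := IH z zs Pz.
  case: (pselect (P a /\ y <= a)) => [[Pa ya]|nay].
  + exists a; split => //; first by rewrite mem_head.
    move=> w; rewrite in_cons => /orP [/eqP -> //|ws] Pw.
    exact: le_trans (ym w ws Pw) ya.
  + exists y; split => //; first by rewrite in_cons ys orbT.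
    move=> w; rewrite in_cons => /orP [/eqP ->|ws] Pw; last exact: ym.
    case: leP => // ay; exfalso; apply: nay; split => //; exact: ltW.
- have xa : x = a.
    by case/orP: xin => [/eqP //| xs]; exfalso; apply: nz; exists x.
  move: Px; rewrite xa => Pa.
  exists a; split => //; first by rewrite mem_head.
  move=> w; rewrite in_cons => /orP [/eqP -> //|ws] Pw; exfalso; apply: nz.
  by exists w.
Qed.

Lemma restrict_val (nu : set X -> \bar R) V : open V -> is_valuation nu ->
  continuous_valuation nu ->
  is_valuation (fun U => nu (U `&` V)) /\ continuous_valuation (fun U => nu (U `&` V)).
Proof.
move=> oV [h0 hpos hmono hmod] hc; split; first split.
- by rewrite set0I.
- by move=> U oU; apply: hpos; apply: openI.
- by move=> U W oU oW UW; apply: hmono; [exact: openI|exact: openI|exact: setSI].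
- move=> U W oU oW /=; rewrite hmod; [|exact: openI|exact: openI].
  by rewrite -setIUl setIACA setIid.
- move=> D [[U0 DU0] oD dD] /=; rewrite setI_bigcupl.
  have -> : \bigcup_(i in D) (i `&` V) = \bigcup_(x in (fun U => U `&` V) @` D) x.
    by rewrite bigcup_image.
  rewrite hc; first by rewrite image_comp.
  split.
  + by exists (U0 `&` V); exists U0.
  + by move=> _ [U DU <-]; apply: openI => //; apply: oD.
  + move=> _ _ [U DU <-] [W DW <-]; case: (dD _ _ DU DW) => Z DZ sZ.
    exists (Z `&` V); first by exists Z.
    by move=> x [[Ux Vx]|[Wx Vx]]; split => //; apply: sZ; [left|right].
Qed.


Lemma arith1 (r w mr : R) : (r + r = w + mr)%R -> (w <= r)%R -> (mr < r)%R -> False.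
Proof. move=> *; lra. Qed.

Lemma peel (nu : set X -> \bar R) (s : seq (\bar R)) : is_valuation nu ->
  continuous_valuation nu -> bounded_valuation nu ->
  (forall U, open U -> nu U \in s) -> nu setT != 0 ->
  exists V (b : R) C, [/\ open V, (0 < b)%R, closed C /\ irreducible C,
     (forall U, open U -> nu U = b%:E * point_val C U + nu (U `&` V)) &
     nu V < nu setT].
Proof.
move=> [h0 hpos hmono hmod] hc hb hin hne.
have [r hr] : exists r : R, nu setT = r%:E.
  move: (hpos _ openT) hb; rewrite /bounded_valuation.
  by case: (nu setT) => [r _ _|//|//]; exists r.
have fin U : open U -> exists u : R, nu U = u%:E /\ (0 <= u <= r)%R.
  move=> oU; have := hpos _ oU; have := hmono _ _ oU openT (@subsetT _ U).
  rewrite hr; case: (nu U) => [u h1 h2|//|//]; exists u; split => //.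
  by apply/andP; split; rewrite -lee_fin.
have r0 : (0 < r)%R.
  have := hpos _ openT; rewrite hr lee_fin le_eqVlt => /orP [/eqP r0|//].
  by move: hne; rewrite hr -r0 eqxx.
pose P := fun y => y < nu setT /\ exists U, open U /\ nu U = y.
have P0 : P (nu set0).
  rewrite /P; split; first by rewrite h0 hr lte_fin.
  by exists set0; split => //; exact: open0.
have [m [_ [mlt [U0 [oU0 hU0]]] mmax]] := max_seq _ _ _ (hin _ open0) P0.
have mmax' W : open W -> nu W < nu setT -> nu W <= m.
  by move=> oW lt; apply: mmax; [exact: hin|split => //; exists W].
have [mr [hmr _]] := fin U0 oU0.
subst m; rewrite hmr in mmax' mmax.
move: mlt; rewrite hmr hr lte_fin => mlt.
pose D := [set W | open W /\ U0 `<=` W /\ nu W = mr%:E].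
pose V := \bigcup_(W in D) W.
have oV : open V by apply: bigcup_open => W [].
have DU0 : D U0 by rewrite /D /=; do !split => //.
have U0V : U0 `<=` V by move=> x U0x; exists U0.
have dirD : directed_open_family D.
  split; first by exists U0.
    by move=> W [].
  rewrite /D /=.
  move=> W1 W2 [o1 [s1 e1]] [o2 [s2 e2]]; exists (W1 `|` W2) => //.
  have o12 := openU o1 o2; split => //; split; first by move=> x ?; left; apply: s1.
  have eI : nu (W1 `&` W2) = mr%:E.
    apply: le_anti; apply/andP; split.
      rewrite -e1; apply: hmono; [exact: openI o1 o2|exact: o1|by move=> x []].
    rewrite -hmr; apply: hmono; [exact: oU0|exact: openI o1 o2|].
    by move=> x Ux; split; [apply: s1|apply: s2].
  have := hmod _ _ o1 o2; rewrite e1 e2 eI.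
  have [w [hw _]] := fin _ o12; rewrite hw -!EFinD => -[] h.
  by congr (_%:E); lra.
have hV : nu V = mr%:E.
  rewrite hc //.
  have -> : nu @` D = [set mr%:E]; last by rewrite ereal_sup1.
  apply/seteqP; split => [y [W [_ [_ e]] <-] //|y ->].
  by exists U0.
have KP W : open W -> ~ (W `<=` V) -> nu (W `|` V) = r%:E.
  move=> oW nWV; have oWV := openU oW oV.
  have ge : mr%:E <= nu (W `|` V) by rewrite -hV; apply: hmono => // x Vx; right.
  have le : nu (W `|` V) <= r%:E by rewrite -hr; apply: hmono; [exact: oWV|exact: openT|exact: subsetT].
  apply: le_anti; rewrite le /= leNgt; apply/negP => lt.
  have lem : nu (W `|` V) <= mr%:E by apply: mmax'; rewrite // hr.
  have eq : nu (W `|` V) = mr%:E by apply: le_anti; rewrite lem ge.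
  apply: nWV => x Wx; exists (W `|` V); last by left.
  by split => //; split => // y /U0V Vy; right.
exists V, (r - mr)%R, (~` V); split => //.
- by rewrite subr_gt0.
- split; first exact: open_closedC.
  split.
  + apply: contrapT => hne0.
    have VT : V = setT.
      apply/seteqP; split => // x _; apply: contrapT => nVx; apply: hne0.
      by exists x.
    by move: mlt; rewrite -lte_fin -hV VT hr ltxx.
  + move=> B1 B2 cB1 cB2 sub.
    case: (pselect (~` V `<=` B1)) => [h1|n1]; first by left.
    case: (pselect (~` V `<=` B2)) => [h2|n2]; first by right.
    exfalso.
    have nsub B : ~ (~` V `<=` B) -> ~ (~` B `<=` V).
      move=> nb sb; apply: nb => x nVx; apply: contrapT => nBx; exact: nVx (sb x nBx).
    have o1 := closed_openC cB1; have o2 := closed_openC cB2.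
    have e1 := KP _ o1 (nsub _ n1).
    have e2 := KP _ o2 (nsub _ n2).
    have := hmod _ _ (openU o1 oV) (openU o2 oV).
    rewrite e1 e2.
    have -> : (~` B1 `|` V) `&` (~` B2 `|` V) = V.
      apply/seteqP; split => x; last by move=> Vx; split; right.
      move=> [[nB1|Vx] [nB2|Vx']] //; apply: contrapT => nVx.
      by case: (sub x nVx).
    rewrite hV; have [w [hw /andP [_ wr]]] := fin _ (openU (openU o1 oV) (openU o2 oV)).
    rewrite hw -!EFinD => -[] h.
    exact: arith1 h wr mlt.
- move=> U oU; case: (pselect (U `&` ~` V !=set0)) => hUC.
  + rewrite pvE asboolT // mule1.
    have nUV : ~ (U `<=` V) by case: hUC => x [Ux nVx] sU; apply: nVx; apply: sU.
    have := hmod _ _ oU oV; rewrite KP // hV.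
    have [u [hu _]] := fin _ oU; have [w [hw _]] := fin _ (openI oU oV).
    rewrite hu hw -!EFinD => -[] h; congr (_%:E); lra.
  + rewrite pvE asboolF // mule0 add0e setIidl //.
    move=> x Ux; apply: contrapT => nVx; apply: hUC; by exists x.
- by rewrite hV lte_fin.
Qed.


Lemma size_filter_lt (T : eqType) (t : T) (s : seq T) : t \in s ->
  (size (seq.filter (fun y => y != t) s) < size s)%N.
Proof.
elim: s => [//|a s IH]; rewrite in_cons /= => ts.
case: (eqVneq a t) => [eat|ne] /=; first by rewrite ltnS seq.size_filter count_size.
rewrite ltnS; apply: IH; move: ts; by rewrite eq_sym (negbTE ne).
Qed.

Lemma zero_case (nu : set X -> \bar R) : is_valuation nu -> nu setT = 0 ->
  exists (n : nat) (a : 'I_n -> R) (C : 'I_n -> set X),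
     [/\ (forall i, (0 < a i)%R),
         (forall i, closed (C i) /\ irreducible (C i)) &
         (forall U, open U -> nu U = \sum_(i < n) (a i)%:E * point_val (C i) U)].
Proof.
move=> [h0 hpos hmono _] hT; exists 0%N, (fun=> 1%R), (fun=> set0); split.
- by move=> i.
- by case.
- move=> U oU; rewrite big_ord0; apply: le_anti; rewrite hpos // andbT -hT.
  by apply: hmono; [exact: oU|exact: openT|exact: subsetT].
Qed.

Lemma fwd_ind k : forall (nu : set X -> \bar R) (s : seq (\bar R)),
  is_valuation nu -> continuous_valuation nu -> bounded_valuation nu ->
  (size s <= k)%N -> (forall U, open U -> nu U \in s) ->
  exists (n : nat) (a : 'I_n -> R) (C : 'I_n -> set X),
     [/\ (forall i, (0 < a i)%R),
         (forall i, closed (C i) /\ irreducible (C i)) &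
         (forall U, open U -> nu U = \sum_(i < n) (a i)%:E * point_val (C i) U)].
Proof.
elim: k => [|k IH] nu s hv hc hb hs hin;
  (case: (eqVneq (nu setT) 0) => [hT|hne]; first exact: zero_case).
  by move: hs (hin _ openT); rewrite leqn0 => /nilP ->.
have [V [b [C [oV b0 [cC iC] hdec hlt]]]] := peel _ _ hv hc hb hin hne.
have [hv' hc'] := restrict_val _ _ oV hv hc.
have hmono := hv; case: hmono => _ _ hmono _.
have hb' : bounded_valuation (fun U => nu (U `&` V)).
  by rewrite /bounded_valuation /= setTI (lt_trans hlt hb).
have hin' U : open U -> nu (U `&` V) \in seq.filter (fun y => y != nu setT) s.
  move=> oU; rewrite mem_filter hin ?andbT; last exact: openI.
  have : nu (U `&` V) < nu setT.
    apply: le_lt_trans hlt; apply: hmono; [exact: openI|exact: oV|by move=> x []].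
  by rewrite lt_neqAle => /andP[].
have hs' : (size (seq.filter (fun y => y != nu setT) s) <= k)%N.
  by rewrite -ltnS; exact: leq_trans (size_filter_lt _ _ _ (hin _ openT)) hs.
have [n [a [C' [ha hC' hnu']]]] := IH _ _ hv' hc' hb' hs' hin'.
exists n.+1, (fun i => if unlift ord0 i is Some j then a j else b),
  (fun i => if unlift ord0 i is Some j then C' j else C); split.
- by move=> i; case: (unliftP ord0 i) => [j _|_]; [exact: ha|exact: b0].
- by move=> i; case: (unliftP ord0 i) => [j _|_]; [exact: hC'|split].
- move=> U oU; rewrite big_ord_recl /= unlift_none hdec //; congr (_ + _).
  rewrite hnu' //; apply: eq_bigr => i _; by rewrite liftK.
Qed.

End Aux.

Theorem proposition4p3 (R : realType) (X : topologicalType) (nu : set X -> \bar R) :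
  (is_valuation nu /\ continuous_valuation nu /\ bounded_valuation nu /\
   finitely_valued nu) <->
  (exists (n : nat) (a : 'I_n -> R) (C : 'I_n -> set X),
     [/\ (forall i, (0 < a i)%R),
         (forall i, closed (C i) /\ irreducible (C i)) &
         (forall U, open U -> nu U = \sum_(i < n) (a i)%:E * point_val (C i) U)]).
Proof.
split.
- move=> [hv [hc [hb hf]]]; have [s hs] := (finite_seqP _).1 hf.
  apply: (fwd_ind (size s) nu s hv hc hb (leqnn _)) => U oU.
  have : (nu @` [set U | open U]) (nu U) by exists U.
  by rewrite hs.
- by move=> [n [a [C [ha hC hnu]]]]; exact: rev_dir hnu.
Qed.
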